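(* Let $n\ge 2$ and integers $0<k_1<k_2<k_3\le n$ with $k_2<n$. Let $g_1:\{0,1\}^{k_2}\to\{0,1\}$ be a Boolean function depending on all of its input variables. Let $P_1$ be the $k_2$-party box on parties $1,\dots,k_2$ with $P_1(a_1\dots a_{k_2}\mid x_1\dots x_{k_2})=2^{-(k_2-1)}$ if $\bigoplus_{i=1}^{k_2}a_i=g_1(x_1,\dots,x_{k_2})$ and $0$ otherwise, and let $P_2$ be the box on parties $k_1,\dots,n$ with $P_2(b_{k_1}\dots b_n\mid x_{k_1}\dots x_n)=2^{-(n-k_1)}$ if $\bigoplus_{i=k_1}^n b_i=\prod_{i=k_1}^{k_3}x_i$ and $0$ otherwise. Using independent copies of $P_1$ and $P_2$ in parallel (each party $i$ feeding its input $x_i$ into every box it participates in), let party $i$ output $c_i=a_i$ for $1\le i\le k_1-1$, $c_i=a_i\oplus b_i$ for $k_1\le i\le k_2$, and $c_i=b_i$ for $k_2+1\le i\le n$. Then the resulting $n$-partite box has the same conditional distribution as the full-correlation box $$P(\vec c\mid\vec x)=\begin{cases}2^{-(n-1)} & \bigoplus_{i=1}^n c_i=g_1(x_1,\dots,x_{k_2})\oplus\prod_{i=k_1}^{k_3}x_i,\\ 0&\text{otherwise.}\end{cases}$$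
   Context: All inputs and outputs are bits; $\oplus$ denotes addition modulo 2. An $m$-party box is a conditional distribution of $m$ output bits given $m$ input bits. *)

(* Defs.v *)
From mathcomp Require Import all_boot all_order all_algebra.
Set Implicit Arguments. Unset Strict Implicit. Unset Printing Implicit Defensive.
Import Order.TTheory GRing.Theory Num.Theory.
Local Open Scope ring_scope.

(* Parties 1..n are represented
   0-based by ['I_n]: party p (1-based) is index p-1.  Output/input strings of
   an m-party box are elements of [{ffun 'I_m -> bool}]; a box is a function
   (outputs, inputs) -> probability. *)

(* the i-th bit (0-based) of an n-bit string, false when out of range *)
Definition bit_at (n : nat) (x : {ffun 'I_n -> bool}) (i : nat) : bool :=
  odflt false (omap x (insub i)).

Definition xorall (m : nat) (a : {ffun 'I_m -> bool}) : bool :=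
  \big[addb/false]_(i < m) a i.

Definition flip (m : nat) (x : {ffun 'I_m -> bool}) (i : 'I_m) : {ffun 'I_m -> bool} :=
  [ffun j => if j == i then ~~ x j else x j].

Definition depends_on_all (m : nat) (g : {ffun 'I_m -> bool} -> bool) : Prop :=
  forall i : 'I_m, exists x : {ffun 'I_m -> bool}, g x != g (flip x i).

Definition P1 (R : realFieldType) (k2 : nat) (g : {ffun 'I_k2 -> bool} -> bool)
  (a x : {ffun 'I_k2 -> bool}) : R :=
  if xorall a == g x then (2 ^+ (k2 - 1)%N)^-1 else 0.

(* P2 on parties k1..n (m := n - k1 + 1 parties, local index t <-> party k1+t);
   prob 2^-(n-k1) iff xor b = prod_{i=k1}^{k3} x_i, i.e. the AND of the first
   l := k3 - k1 + 1 local inputs. *)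
Definition P2 (R : realFieldType) (m l : nat) (b y : {ffun 'I_m -> bool}) : R :=
  if xorall b == \big[andb/true]_(t < m | (t < l)%N) y t then (2 ^+ (m - 1)%N)^-1 else 0.

Definition inputs1 (n k2 : nat) (x : {ffun 'I_n -> bool}) : {ffun 'I_k2 -> bool} :=
  [ffun j : 'I_k2 => bit_at x j].

(* inputs of P2: x_{k1}..x_n (0-based indices k1-1 .. n-1) *)
Definition inputs2 (n k1 : nat) (x : {ffun 'I_n -> bool}) : {ffun 'I_(n - k1).+1 -> bool} :=
  [ffun t : 'I_(n - k1).+1 => bit_at x (k1.-1 + t)].

(* output of the wiring: party p = i+1 outputs a_p if p < k1, a_p xor b_p if
   k1 <= p <= k2, b_p if p > k2; b_p sits at local index p - k1 = i - (k1-1). *)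
Definition wire_out (n k1 k2 : nat) (a : {ffun 'I_k2 -> bool})
  (b : {ffun 'I_(n - k1).+1 -> bool}) : {ffun 'I_n -> bool} :=
  [ffun i : 'I_n =>
     if (i.+1 < k1)%N then bit_at a i
     else if (i.+1 <= k2)%N then bit_at a i (+) bit_at b (i - k1.-1)%N
     else bit_at b (i - k1.-1)%N].

Definition wired_box (R : realFieldType) (n k1 k2 k3 : nat)
  (g : {ffun 'I_k2 -> bool} -> bool) (c x : {ffun 'I_n -> bool}) : R :=
  \sum_(a : {ffun 'I_k2 -> bool}) \sum_(b : {ffun 'I_(n - k1).+1 -> bool})
     @P1 R k2 g a (@inputs1 n k2 x) * @P2 R (n - k1).+1 (k3 - k1).+1 b (@inputs2 n k1 x)
       * (c == @wire_out n k1 k2 a b)%:R.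

Definition full_box (R : realFieldType) (n k1 k2 k3 : nat)
  (g : {ffun 'I_k2 -> bool} -> bool) (c x : {ffun 'I_n -> bool}) : R :=
  if xorall c == g (@inputs1 n k2 x) (+) \big[andb/true]_(i < n | (k1.-1 <= i < k3)%N) x i
  then (2 ^+ (n - 1)%N)^-1 else 0.

(* Main.v *)
Require Import Defs.
From mathcomp Require Import all_boot all_order all_algebra zify ring.
Set Implicit Arguments. Unset Strict Implicit. Unset Printing Implicit Defensive.
Import Order.TTheory GRing.Theory Num.Theory.

Lemma bit_at_ord n (x : {ffun 'I_n -> bool}) (i : 'I_n) : bit_at x i = x i.
Proof. by rewrite /bit_at valK. Qed.

Lemma bit_at_out n (x : {ffun 'I_n -> bool}) i : (n <= i)%N -> bit_at x i = false.
Proof. by move=> h; rewrite /bit_at insubN // -leqNgt. Qed.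

Lemma bit_at_ffun m (F : nat -> bool) j :
  bit_at [ffun t : 'I_m => F t] j = (j < m)%N && F j.
Proof.
case: (ltnP j m) => h; last by rewrite bit_at_out.
by rewrite (bit_at_ord _ (Ordinal h)) ffunE.
Qed.

Lemma ffun_bitP n (x y : {ffun 'I_n -> bool}) :
  (forall i, (i < n)%N -> bit_at x i = bit_at y i) -> x = y.
Proof. by move=> h; apply/ffunP => i; rewrite -!bit_at_ord h. Qed.

Lemma xorall_nat n (x : {ffun 'I_n -> bool}) N : (n <= N)%N ->
  xorall x = \big[addb/false]_(0 <= i < N) bit_at x i.
Proof.
move=> hN; rewrite (@big_cat_nat _ _ _ n 0 N) //= [X in _ (+) X]big1_seq.
  by rewrite addbF big_mkord /xorall; apply: eq_bigr => i _; rewrite bit_at_ord.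
by move=> i /andP[_]; rewrite mem_index_iota => /andP[h _]; rewrite bit_at_out.
Qed.


Section S.
Variables (n k1 k2 : nat) (h1 : (0 < k1)%N) (h12 : (k1 < k2)%N) (h2n : (k2 < n)%N).

Definition low (c : {ffun 'I_n -> bool}) (a : {ffun 'I_k2 -> bool}) :=
  [forall i : 'I_k2, (i < k1.-1)%N ==> (a i == bit_at c i)].

Definition bof (c : {ffun 'I_n -> bool}) (a : {ffun 'I_k2 -> bool}) :
  {ffun 'I_(n - k1).+1 -> bool} :=
  [ffun t : 'I_(n - k1).+1 => bit_at c (k1.-1 + t) (+) bit_at a (k1.-1 + t)].

Lemma lowP c a : reflect (forall i, (i < k1.-1)%N -> bit_at a i = bit_at c i) (low c a).
Proof.
apply: (iffP forallP) => [h i hi | h i].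
  have hi2 : (i < k2)%N by lia.
  by move: (h (Ordinal hi2)); rewrite -bit_at_ord /= hi => /eqP.
by apply/implyP => hi; rewrite -bit_at_ord h.
Qed.

Lemma wire_bit a b i : bit_at (@wire_out n k1 k2 a b) i =
  if (i < k1.-1)%N then bit_at a i else bit_at a i (+) bit_at b (i - k1.-1).
Proof.
case: (ltnP i n) => hi.
  rewrite (bit_at_ord _ (Ordinal hi)) ffunE /=.
  have -> : (i.+1 < k1)%N = (i < k1.-1)%N by lia.
  case: ifP => // _; case: ifP => // hk.
  by rewrite (@bit_at_out k2 a i) //; lia.
rewrite !bit_at_out //; try lia.
by have -> : (i < k1.-1)%N = false by lia.
Qed.

Lemma wire_eq c a b : (c == @wire_out n k1 k2 a b) = low c a && (b == bof c a).
Proof.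
apply/idP/idP.
  move/eqP => ->; apply/andP; split.
    by apply/lowP => i hi; rewrite wire_bit hi.
  apply/eqP/ffunP => t; rewrite ffunE wire_bit.
  have -> : (k1.-1 + t < k1.-1)%N = false by lia.
  by rewrite addKn bit_at_ord; case: (bit_at a _); case: (b t).
case/andP => /lowP hl /eqP ->; apply/eqP/ffun_bitP => i hi; rewrite wire_bit.
case: ifP => hK; first by rewrite hl.
rewrite /bof (@bit_at_ffun _ (fun j => bit_at c (k1.-1 + j) (+) bit_at a (k1.-1 + j))).
have -> : (i - k1.-1 < (n - k1).+1)%N by lia.
have -> : k1.-1 + (i - k1.-1) = i by lia.
by rewrite /=; case: (bit_at a i); case: (bit_at c i).
Qed.


Lemma big_shift (F : nat -> bool) K N :
  \big[addb/false]_(K <= i < N) F i = \big[addb/false]_(0 <= t < N - K) F (K + t).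
Proof.
rewrite -{1}[K]add0n big_addn; apply: eq_bigr => i _; by rewrite addnC.
Qed.

Lemma xor3 L x y : x (+) y = (L (+) x) (+) (L (+) y).
Proof. by case: L; case: x; case: y. Qed.

Lemma xor_bof c a : low c a -> xorall (bof c a) = xorall c (+) xorall a.
Proof.
move/lowP => hl.
rewrite (xorall_nat (bof c a) (leqnn _)) (xorall_nat c (leqnn n)) (@xorall_nat _ a n (ltnW h2n)).
have hK : (0 <= k1.-1 <= n)%N by lia.
rewrite !(@big_cat_nat _ _ _ k1.-1 0 n) //; try lia.
have -> : \big[addb/false]_(0 <= i < k1.-1) bit_at a i =
          \big[addb/false]_(0 <= i < k1.-1) bit_at c i.
  by apply: eq_big_nat => i /andP[_ hi]; rewrite hl.
have -> : \big[addb/false]_(0 <= t < (n - k1).+1) bit_at (bof c a) t =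
   \big[addb/false]_(0 <= t < (n - k1).+1) (bit_at c (k1.-1 + t) (+) bit_at a (k1.-1 + t)).
  apply: eq_big_nat => t /andP[_ ht].
  by rewrite /bof (@bit_at_ffun _ (fun j => bit_at c (k1.-1 + j) (+) bit_at a (k1.-1 + j))) ht.
rewrite big_split /=.
rewrite !(big_shift _ k1.-1 n).
have -> : (n - k1.-1 = (n - k1).+1)%N by lia.
by rewrite -xor3.
Qed.


Lemma and_eq k3 (x : {ffun 'I_n -> bool}) : (k2 < k3)%N -> (k3 <= n)%N ->
  \big[andb/true]_(t < (n - k1).+1 | (t < (k3 - k1).+1)%N) @inputs2 n k1 x t =
  \big[andb/true]_(i < n | (k1.-1 <= i < k3)%N) x i.
Proof.
move=> h23 h3n.
rewrite big_mkcond [RHS]big_mkcond.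
under eq_bigr => t _ do rewrite ffunE.
under [RHS]eq_bigr => i _ do rewrite -bit_at_ord.
rewrite -(big_mkord xpredT (fun t => if (t < (k3 - k1).+1)%N then bit_at x (k1.-1 + t) else true)).
rewrite -(big_mkord xpredT (fun i => if (k1.-1 <= i < k3)%N then bit_at x i else true)).
rewrite (@big_cat_nat _ _ _ k1.-1 0 n) //=; try lia.
rewrite [X in _ = X && _]big1_seq ?andTb; last first.
  move=> i /andP[_]; rewrite mem_index_iota => /andP[_ hi].
  by have -> : (k1.-1 <= i < k3)%N = false by lia.
rewrite -{2}[k1.-1]add0n big_addn.
have -> : (n - k1.-1 = (n - k1).+1)%N by lia.
apply: eq_big_nat => t _.
have -> : (k1.-1 <= t + k1.-1 < k3)%N = (t < (k3 - k1).+1)%N by lia.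
by rewrite addnC.
Qed.

Lemma flipK m (a : {ffun 'I_m -> bool}) i : flip (flip a i) i = a.
Proof. by apply/ffunP => j; rewrite !ffunE; case: eqP => // _; rewrite negbK. Qed.

Lemma xorall_flip m (a : {ffun 'I_m -> bool}) i : xorall (flip a i) = ~~ xorall a.
Proof.
rewrite /xorall (bigD1 i) //= [in RHS](bigD1 i) //= ffunE eqxx -addNb.
congr (_ (+) _); apply: eq_bigr => j hj; rewrite ffunE; by rewrite (negbTE hj).
Qed.

Lemma card_low c : #|[set a | low c a]| = (2 ^ (k2 - k1.-1))%N.
Proof.
pose F := fun i : 'I_k2 => if (i < k1.-1)%N then pred1 (bit_at c i) else predT.
have -> : #|[set a | low c a]| = #|(family F : simpl_pred {ffun 'I_k2 -> bool})|.
  apply: eq_card => a; rewrite inE /low unfold_in /=; apply: eq_forallb => i.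
  by rewrite /F; case: (i < k1.-1)%N.
rewrite card_family foldrE big_image /=.
rewrite (eq_bigr (fun i : 'I_k2 => if (i < k1.-1)%N then 1%N else 2%N)); last first.
  by move=> i _; rewrite /F; case: (i < k1.-1)%N; rewrite ?card1 //= cardT enumT unlock.
rewrite -(big_mkord xpredT (fun i => if (i < k1.-1)%N then 1%N else 2%N)).
rewrite (@big_cat_nat _ _ _ k1.-1 0 k2) //=; try lia.
rewrite big1_seq ?mul1n; last first.
  by move=> i /andP[_]; rewrite mem_index_iota => /andP[_ ->].
rewrite (eq_big_nat _ _ (F2 := fun _ => 2%N)) ?prod_nat_const_nat //.
by move=> i /andP[hi _]; rewrite ltnNge hi.
Qed.


Lemma count_low c G : #|[set a | low c a && (xorall a == G)]| = (2 ^ (k2 - k1))%N.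
Proof.
have i0lt : (k2.-1 < k2)%N by lia.
pose i0 := Ordinal i0lt.
have hsym H : (#|[set a | low c a && (xorall a == H)]| <=
               #|[set a | low c a && (xorall a == ~~ H)]|)%N.
  apply: (@leq_trans #|(fun a => flip a i0) @: [set a | low c a && (xorall a == H)]|); first by rewrite card_imset //; exact: (@can_inj _ _ (fun a => flip a i0) (fun a => flip a i0) (fun a => flipK a i0)).
  apply: subset_leq_card; apply/subsetP => _ /imsetP[a ha ->].
  move: ha; rewrite !inE => /andP[/lowP hl /eqP hx].
  rewrite xorall_flip hx eqxx andbT; apply/lowP => i hi.
  have hi2 : (i < k2)%N by lia.
  rewrite (bit_at_ord _ (Ordinal hi2)) ffunE.
  have -> : (Ordinal hi2 == i0) = false by apply/eqP => /(congr1 val) /=; lia.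
  by rewrite -hl // (bit_at_ord _ (Ordinal hi2)).
have e1 : [set a | low c a] :&: [set a | xorall a == G] = [set a | low c a && (xorall a == G)].
  by apply/setP => a; rewrite !inE.
have e2 : [set a | low c a] :\: [set a | xorall a == G] = [set a | low c a && (xorall a == ~~ G)].
  by apply/setP => a; rewrite !inE andbC; case: (xorall a); case: (G).
have hID := cardsID [set a | xorall a == G] [set a | low c a].
rewrite e1 e2 card_low in hID.
have h1' := hsym G. have h2' := hsym (~~ G). rewrite negbK in h2'.
have e3 : (k2 - k1.-1 = (k2 - k1).+1)%N by lia. rewrite e3 in hID.
rewrite expnS in hID. lia.
Qed.

End S.

Local Open Scope ring_scope.
Lemma sum_bool (R : realFieldType) (T : finType) (P : pred T) :
  \sum_(a : T) ((P a)%:R : R) = (#|[set a | P a]|)%:R.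
Proof.
rewrite -sum1_card natr_sum [RHS]big_mkcond /=; apply: eq_bigr => a _.
by rewrite inE; case: (P a).
Qed.

Theorem lemma2 (R : realFieldType) (n k1 k2 k3 : nat)
  (hn : (2 <= n)%N) (h1 : (0 < k1)%N) (h12 : (k1 < k2)%N) (h23 : (k2 < k3)%N)
  (h3n : (k3 <= n)%N) (h2n : (k2 < n)%N)
  (g : {ffun 'I_k2 -> bool} -> bool) (hg : depends_on_all g) :
  forall c x : {ffun 'I_n -> bool},
    @wired_box R n k1 k2 k3 g c x = @full_box R n k1 k2 k3 g c x.
Proof.
move=> c x.
set G := g (inputs1 k2 x).
set A := \big[andb/true]_(i < n | (k1.-1 <= i < k3)%N) x i.
pose Kc : R := if xorall c == G (+) A then
   (2 ^+ (k2 - 1)%N)^-1 * (2 ^+ ((n - k1).+1 - 1)%N)^-1 else 0.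
have step a : \sum_(b : {ffun 'I_(n - k1).+1 -> bool})
     @P1 R k2 g a (inputs1 k2 x) * @P2 R (n - k1).+1 (k3 - k1).+1 b (inputs2 k1 x)
       * (c == @wire_out n k1 k2 a b)%:R
   = ((low k1 c a && (xorall a == G))%:R * Kc).
  under eq_bigr => b _ do rewrite wire_eq //.
  rewrite (bigD1 (bof k1 c a)) //= big1 ?addr0 => [|b hb]; last by rewrite (negbTE hb) andbF mulr0.
  rewrite eqxx andbT.
  case hl: (low k1 c a); last by rewrite !mulr0 mul0r.
  rewrite /P1 /P2 (xor_bof h1 h12 h2n hl) (and_eq h1 h12 h2n x h23 h3n) -/A -/G /Kc.
  case: eqP => [-> | hne] /=; last by rewrite !mul0r.
  have -> : (xorall c (+) G == A) = (xorall c == G (+) A).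
    by case: (xorall c); case: (G); case: (A).
  by case: ifP => _; rewrite ?mulr0 ?mul0r ?mulr1 ?mul1r.
rewrite /wired_box (eq_bigr _ (fun a _ => step a)) -big_distrl /= sum_bool count_low //.
rewrite /full_box -/A -/G /Kc; case: ifP => _; last by rewrite mulr0.
have e1 : (k2 - 1 = (k2 - k1) + (k1 - 1))%N by lia.
have e2 : (n - 1 = (n - k1) + (k1 - 1))%N by lia.
have e3 : ((n - k1).+1 - 1 = n - k1)%N by lia.
rewrite e1 e2 e3 !exprD natrX.
have h2 : (2 : R) != 0 by rewrite pnatr_eq0.
field; rewrite ?mulf_neq0 ?expf_neq0 //.
Qed.
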